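(* Let $D$ be a $3$-dicritical digraph. Then $D$ does not contain $O_5$ as a (not necessarily induced) subdigraph.
   Context: A $2$-dicolouring is a map to $\{1,2\}$ whose colour classes induce acyclic subdigraphs (digons count as cycles). $D$ is $3$-dicritical if $D$ has no $2$-dicolouring but every proper subdigraph has one. $O_5$ is the oriented graph on vertices $u,v,x,y,z$ with arcs $xy,yz,zx$ (a directed triangle), $ux,uy,uz$, $xv,yv,zv$, and $uv$. ''Contains as a subdigraph'' means up to isomorphism. *)

(* Defs.v *)
From mathcomp Require Import all_boot.
Set Implicit Arguments. Unset Strict Implicit. Unset Printing Implicit Defensive.

(* A digraph is a finite vertex type V with an arc relation A : rel V
   (no parallel arcs by construction; looplessness is the hypothesis
   [irreflexive A]).  Digons x->y->x are allowed. *)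

(* Digons are cycles of length 2. *)
Definition dicycle (V : finType) (B : rel V) (s : seq V) : bool :=
  [&& s != [::], uniq s & cycle B s].

Definition acyclic_set (V : finType) (B : rel V) (S : {set V}) : Prop :=
  forall s : seq V, all (fun x => x \in S) s -> ~~ dicycle B s.

(* The subdigraph with vertex set W and arc relation B (arcs of B are
   assumed to lie inside W) has a 2-dicolouring: a map c from W to
   {1,2} (here bool) whose colour classes induce acyclic subdigraphs. *)
Definition two_dicolourable (V : finType) (W : {set V}) (B : rel V) : Prop :=
  exists c : V -> bool,
    forall b : bool, acyclic_set B [set x in W | c x == b].

Definition subdigraph (V : finType) (A : rel V) (W : {set V}) (B : rel V) : Prop :=
  forall x y, B x y -> [&& x \in W, y \in W & A x y].

Definition proper_subdigraph (V : finType) (A : rel V) (W : {set V}) (B : rel V)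
  : Prop :=
  subdigraph A W B /\ (W != setT \/ exists x y, A x y && ~~ B x y).

Definition dicritical3 (V : finType) (A : rel V) : Prop :=
  ~ two_dicolourable setT A /\
  forall (W : {set V}) (B : rel V), proper_subdigraph A W B -> two_dicolourable W B.

(* O_5 on 'I_5 with u = 0, v = 1, x = 2, y = 3, z = 4:
   arcs xy, yz, zx, ux, uy, uz, xv, yv, zv, uv. *)
Definition O5_arcs : seq (nat * nat) :=
  [:: (2, 3); (3, 4); (4, 2); (0, 2); (0, 3); (0, 4); (2, 1); (3, 1); (4, 1); (0, 1)].

Definition O5_arc (a b : 'I_5) : bool := (nat_of_ord a, nat_of_ord b) \in O5_arcs.

Definition contains_O5 (V : finType) (A : rel V) : Prop :=
  exists f : 'I_5 -> V, injective f /\ forall a b : 'I_5, O5_arc a b -> A (f a) (f b).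

(* Main.v *)
Require Import Defs.
From Stdlib Require Import Classical.
From mathcomp Require Import all_boot.

Set Implicit Arguments. Unset Strict Implicit.
Section Aux.
Variable V : finType.

Lemma shorten_ex (e : rel V) x p : path e x p ->
  exists p', [/\ path e x p', uniq (x :: p'), {subset p' <= p} & last x p' = last x p].
Proof. by case/shortenP => p' ? ? ?; exists p'. Qed.

Lemma closed_walk (B : rel V) (S : {set V}) w a q :
  B w a -> path B a q -> last a q = w -> all (fun t => t \in S) (a :: q) ->
  exists s, all (fun t => t \in S) s && dicycle B s.
Proof.
move=> Bwa Pq Lq /= /andP[Sa Sq].
have [p' [P' U' Sub' L']] := shorten_ex Pq.
exists (a :: p'); rewrite /dicycle.
have -> : uniq (a :: p') by [].
rewrite /= rcons_path P' L' Lq Bwa Sa /= !andbT.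
apply/allP => t /Sub' ht; exact: (allP Sq).
Qed.

Lemma split_lemma (A : rel V) u v x p :
  path A x p -> ~~ path (fun a b => A a b && ~~ ((a == u) && (b == v))) x p ->
  exists p1 p2, [/\ path (fun a b => A a b && ~~ ((a == u) && (b == v))) x p1,
     last x p1 = u, p = p1 ++ v :: p2 & path A v p2].
Proof.
elim: p x => [|y p IH] x //= /andP[Axy Pp].
case Hb: (~~ ((x == u) && (y == v))).
  rewrite Axy /= => nP.
  have [p1 [p2 [P1 L1 E P2]]] := IH y Pp nP.
  by exists (y :: p1), p2; rewrite /= Hb Axy P1 E.
move: Hb => /negbFE /andP[/eqP ex /eqP ey] _; subst.
by exists [::], p.
Qed.

Lemma avoid_lemma (A : rel V) u v x p :
  path A x p -> v \notin p ->
  path (fun a b => A a b && ~~ ((a == u) && (b == v))) x p.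
Proof.
elim: p x => [|y p IH] x //= /andP[Axy Pp].
rewrite inE negb_or => /andP[nvy nvp].
by rewrite Axy /= (eq_sym y) (negbTE nvy) andbF IH.
Qed.

End Aux.

Theorem lemma15 (V : finType) (A : rel V) :
  irreflexive A -> dicritical3 A -> ~ contains_O5 A.
Proof.
move=> irrA [ncol crit] [f [injf arcs]].
pose u := f (@Ordinal 5 0 isT). pose v := f (@Ordinal 5 1 isT).
pose x := f (@Ordinal 5 2 isT). pose y := f (@Ordinal 5 3 isT).
pose z := f (@Ordinal 5 4 isT).
have Auv : A u v by apply: arcs.
have Aux : A u x by apply: arcs.
have Auy : A u y by apply: arcs.
have Auz : A u z by apply: arcs.
have Axv : A x v by apply: arcs.
have Ayv : A y v by apply: arcs.
have Azv : A z v by apply: arcs.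
have Axy : A x y by apply: arcs.
have Ayz : A y z by apply: arcs.
have Azx : A z x by apply: arcs.
have neq : forall i j : 'I_5, i != j -> f i != f j.
  by move=> i j; apply: contra => /eqP /injf ->.
have xu : x != u by apply: neq.
have yu : y != u by apply: neq.
have zu : z != u by apply: neq.
have xv : x != v by apply: neq.
have yv : y != v by apply: neq.
have zv : z != v by apply: neq.
have xy : x != y by apply: neq.
have xz : x != z by apply: neq.
have yz : y != z by apply: neq.
pose B := fun a b => A a b && ~~ ((a == u) && (b == v)).
have prop : proper_subdigraph A setT B.
  split; first by move=> a b /andP[Hab _]; rewrite !in_setT Hab.
  by right; exists u, v; rewrite /B Auv !eqxx.
have [c Hc] := crit _ _ prop.
have : exists b s, all (fun t => t \in [set t in setT | c t == b]) s && dicycle A s.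
  apply: NNPP => H; apply: ncol; exists c => b s Hs; apply/negP => Hd.
  by apply: H; exists b, s; rewrite Hs Hd.
case=> b [s /andP[Hs Hd]].
set S := [set t in setT | c t == b] in Hs.
have Hcb : forall (s : seq V), all (fun t => t \in S) s -> ~~ dicycle B s.
  exact: Hc.
case: s Hs Hd => [|a q] // Hs /and3P[_ Uq Cq].
case HB: (path B a (rcons q a)).
  by move: (Hcb _ Hs); rewrite /dicycle Uq /= HB.
have [p1 [p2 [P1 L1 E P2]]] := split_lemma Cq (negbT HB).
have La : last v p2 = a.
  by move: (last_rcons a q a); rewrite E last_cat.
have W : path A v (p2 ++ p1).
  rewrite cat_path P2 La; apply: sub_path P1 => ? ? /andP[] //.
have HS : forall t, t \in p1 ++ v :: p2 -> t \in S.
  move=> t; rewrite -E mem_rcons => ht; exact: (allP Hs).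
have SW : all (fun t => t \in S) (v :: p2 ++ p1).
  apply/allP => t ht; apply: HS; move: ht; rewrite !inE !mem_cat !inE.
  by case/orP => [->|/orP[]->]; rewrite ?orbT.
have Su : u \in S.
  have : u \in a :: p1 by rewrite -L1 mem_last.
  rewrite inE => /orP[/eqP ->|hu]; first exact: (allP Hs a (mem_head _ _)).
  by apply: HS; rewrite mem_cat hu.
have Sv : v \in S by case/andP: SW.
have [p' [P' U' Sub' L']] := shorten_ex W.
have PB : path B v p' by apply: avoid_lemma; case/andP: U'.
have Sp' : all (fun t => t \in S) p'.
  by apply/allP => t /Sub' ht; case/andP: SW => _ /allP; apply.
have L'' : last v p' = u.
  by rewrite L' last_cat La.
have : exists w, [/\ w \in S, A u w, A w v, w != u & w != v].
  case Sx: (x \in S); first by exists x.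
  case Sy: (y \in S); first by exists y.
  case Sz: (z \in S); first by exists z.
  exfalso; apply: (negP (Hc (~~ b) [:: x; y; z] _)).
    move: Sx Sy Sz; rewrite /S !inE /= => Sx Sy Sz.
    have nb : forall t, (c t == b) = false -> c t == ~~ b by move=> t; case: (c t); case: (b).
    apply/and4P; split=> //; rewrite ?inE; [exact: (nb x Sx) | exact: (nb y Sy) | exact: (nb z Sz)].
  rewrite /dicycle /= !inE (negbTE xy) (negbTE xz) yz /B Axy Ayz Azx.
  by rewrite (negbTE xu) (negbTE yu) (negbTE zu).
case=> w [Sw Auw Awv wu wv].
have [s' /andP[Ss' Ds']] : exists s, all (fun t => t \in S) s && dicycle B s.
  apply: (@closed_walk _ B S u w (v :: p')).
  - by rewrite /B Auw (negbTE wv) andbF.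
  - by rewrite /= /B Awv (negbTE wu) PB.
  - by [].
  - by rewrite /= Sw Sv Sp'.
by move: (Hcb _ Ss'); rewrite Ds'.
Qed.
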